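(* Let $\hat\tau$ be a $\widehat{\mathbb{Z}}$-tropical type of genus $g$ inducing essential types. Then $$0\le k_{\hat\tau}\le\max(2g-1,0),\qquad\text{where } k_{\hat\tau}=b_1(\Gamma)+2\sum_{v\in V_+}g_v-|V_+|.$$
   Context: A $\widehat{\mathbb{Z}}$-tropical type $\hat\tau$ consists of a graph $\Gamma$ (vertices $V$, edges $E$, $n$ legs) with genera $g_v\ge0$ satisfying $\sum_vg_v+b_1(\Gamma)=g$, degrees $d_v\in\mathbb{Z}$, a partition $V=V_0\sqcup V_+$ into external and internal vertices, and slopes $m_{\vec e}=-m_{\overleftarrow e}\in\widehat{\mathbb{Z}}$ satisfying balancing $d_v=\sum_{e\ni v}m_{\vec e}+\sum_{\text{legs }i\text{ at }v}c_i$ in $\widehat{\mathbb{Z}}$ (for given coarse contact orders $c_i$). It induces essential types if every edge joins a vertex of $V_0$ to a vertex of $V_+$ and every $v\in V_+$ has $g_v>0$. *)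

(* Defs.v *)
From mathcomp Require Import all_boot all_order all_algebra.
Set Implicit Arguments. Unset Strict Implicit. Unset Printing Implicit Defensive.
Import Order.TTheory GRing.Theory Num.Theory.

(* Profinite integers  Zhat = lim_N Z/NZ, represented by compatible families
   of integer representatives: zh N is a lift of the N-th component. *)
Record Zhat := MkZhat {
  zh : nat -> int;
  zh_compat : forall M N : nat, (0 < M)%N -> (M %| N)%N ->
                (zh N = zh M %[mod M])%Z }.

Section Graphs.
Variables (V E : finType) (src tgt : E -> V).

Definition adj : rel V := fun x y =>
  [exists e : E, ((src e == x) && (tgt e == y)) || ((src e == y) && (tgt e == x))].

Definition graph_connected : Prop := forall x y : V, connect adj x y.

Definition betti1 : int :=
  (#|E|%:Z - #|V|%:Z + (n_comp (connect adj) (predT : {pred V}))%:Z)%R.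
End Graphs.

Definition k_tau (V E : finType) (src tgt : E -> V) (gv : V -> nat)
  (Vp : {set V}) : int :=
  (betti1 src tgt + 2%:Z * (\sum_(v in Vp) (gv v)%:Z) - #|Vp|%:Z)%R.

(* Main.v *)
Require Import Defs.
From mathcomp Require Import all_boot all_order all_algebra zify.
Import Order.TTheory GRing.Theory Num.Theory.


Section G.
Variables (V E : finType) (src tgt : E -> V) (r : V).

Fixpoint Sr n : {set V} := if n is k.+1 then Sr k :|: [set y | [exists x in Sr k, adj src tgt x y]] else [set r].

Lemma Sr_reach p x k : x \in Sr k -> path (adj src tgt) x p -> last x p \in Sr (k + size p).
Proof.
elim: p x k => [|y p IH] x k /=; first by rewrite addn0.
move=> hx /andP[hxy hp]; rewrite addnS -addSn; apply: IH hp.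
by rewrite /= inE; apply/orP; right; rewrite inE; apply/existsP; exists x; rewrite hx.
Qed.

Lemma Sr_ex v : connect (adj src tgt) r v -> exists n, v \in Sr n.
Proof.
move=> /connectP[p hp ->]; exists (0 + size p); apply: Sr_reach hp.
by rewrite /= inE.
Qed.

Lemma card_conn : (forall v, connect (adj src tgt) r v) -> (#|V| <= #|E| + 1)%N.
Proof.
move=> hc.
pose dist v := ex_minn (Sr_ex v (hc v)).
have distP v : v \in Sr (dist v) by rewrite /dist; case: ex_minnP.
have distM v n : v \in Sr n -> (dist v <= n)%N by rewrite /dist; case: ex_minnP => m _ H /H.
pose P v e := ((src e == v) && (dist (tgt e) < dist v)%N) || ((tgt e == v) && (dist (src e) < dist v)%N).
pose f v := [pick e | P v e].
pose A := [set v | v != r].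
have fS v : v \in A -> exists e, f v = Some e /\ P v e.
  rewrite inE => vr; rewrite /f; case: pickP => [e he|]; first by exists e.
  move=> hn; exfalso.
  have := distP v; case hd: (dist v) => [|j].
    by rewrite /= inE (negbTE vr).
  rewrite /= inE => /orP[hv|].
    by have := distM _ _ hv; rewrite hd ltnn.
  rewrite inE => /existsP[x /andP[hx /existsP[e he]]].
  have hxj := distM _ _ hx.
  have := hn e; rewrite /P hd.
  case/orP: he => /andP[/eqP hs /eqP ht]; rewrite hs ht eqxx /= ?andbT.
    by rewrite (ltnS (dist x)) hxj ?orbT => -/esym/negP; rewrite /=.
  by rewrite (ltnS (dist x)) hxj ?orbT => -/esym/negP; rewrite /=.
have inj : {in A &, injective f}.
  move=> v w hv hw; case: (fS v hv) => e [-> hPv]; case: (fS w hw) => e' [-> hPw] [ee].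
  subst e'; move: hPv hPw; rewrite /P.
  case/orP=> /andP[/eqP hv1 hv2]; case/orP=> /andP[/eqP hw1 hw2]; subst => //.
  - by move: (ltn_trans hv2 hw2); rewrite ltnn.
  - by move: (ltn_trans hv2 hw2); rewrite ltnn.
have h1 : #|A| = #|f @: A| by rewrite card_in_imset.
have h2 : f @: A \subset [set~ None].
  apply/subsetP => _ /imsetP[v hv ->]; rewrite !inE; by case: (fS v hv) => e [-> _].
have h3 := subset_leq_card h2; rewrite cardsC1 card_option /= in h3.
have h4 : #|A| = #|V|.-1.
  have -> : A = [set~ r] by apply/setP => x; rewrite !inE.
  by rewrite cardsC1.
have h5 : (0 < #|V|)%N by apply/card_gt0P; exists r.
rewrite -h1 h4 in h3; by move: h3 h5; case: #|V| => // k; rewrite addn1 ltnS.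
Qed.
End G.

Lemma betti_ge0 (V E : finType) (src tgt : E -> V) :
  graph_connected src tgt -> (0 <= betti1 src tgt)%R.
Proof.
move=> hc; rewrite /betti1.
case: (pickP (predT : pred V)) => [r _|h0].
  have h1 := @card_conn V E src tgt r (hc r).
  have h2 : (0 < n_comp (connect (adj src tgt)) (predT : {pred V}))%N.
    have sym : connect_sym (connect (adj src tgt)).
      by move=> x y; rewrite (connect1 (hc x y)) (connect1 (hc y x)).
    apply/card_gt0P; exists (fingraph.root (connect (adj src tgt)) r).
    by rewrite inE /= roots_root.
  lia.
have -> : #|V| = 0%N by apply: eq_card0.
lia.
Qed.

(* Graph: vertices V, edges E, each edge e oriented src e -> tgt e; n legs
   attached at legs i with coarse contact order c i; genera gv; degrees d;
   internal vertices Vp (external ones: ~: Vp); slope m e in Zhat of the edge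
   oriented src -> tgt (the opposite orientation has slope - m e). *)
Theorem lemma3p5p5 (g n : nat) (V E : finType) (src tgt : E -> V)
  (legs : 'I_n -> V) (c : 'I_n -> int) (gv : V -> nat) (d : V -> int)
  (Vp : {set V}) (m : E -> Zhat)
  (Hconn : graph_connected src tgt)
  (Hgenus : ((\sum_(v : V) (gv v)%:Z) + betti1 src tgt = g%:Z)%R)
  (Hbal : forall (v : V) (N : nat), (0 < N)%N ->
     (d v = (\sum_(e : E | src e == v) zh (m e) N)
            - (\sum_(e : E | tgt e == v) zh (m e) N)
            + (\sum_(i : 'I_n | legs i == v) c i) %[mod N])%Z)
  (Hess_edges : forall e : E, (src e \in Vp) != (tgt e \in Vp))
  (Hess_genus : forall v : V, v \in Vp -> (0 < gv v)%N) :
  (0 <= k_tau src tgt gv Vp /\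
   k_tau src tgt gv Vp <= Num.max (2 * g%:Z - 1) 0)%R.
Proof.
have hb := @betti_ge0 V E src tgt Hconn.
set b := betti1 src tgt in hb Hgenus *.
rewrite /k_tau -/b.
set S := (\sum_(v in Vp) (gv v)%:Z)%R.
set T := (\sum_(v : V) (gv v)%:Z)%R in Hgenus.
have hST : (S <= T)%R.
  rewrite /T (bigID (fun v => v \in Vp)) /= -/S lerDl.
  by apply: sumr_ge0 => v _.
have hpS : ((#|Vp|)%:Z <= S)%R.
  have -> : ((#|Vp|)%:Z = \sum_(v in Vp) (1 : int))%R by rewrite sumr_const natz.
  by apply: ler_sum => v /Hess_genus; rewrite lez_nat.
have hp0 : #|Vp| = 0%N -> S = 0%R.
  by move/cards0_eq => E0; rewrite /S E0 big_set0.
rewrite le_max.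
case: (posnP #|Vp|) => [/[dup] /hp0 hS0 hp|hp].
  rewrite hS0 hp; lia.
lia.
Qed.
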